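(* Let $\mathcal{V}$ be the set of positive integers $v$ such that $v \equiv 27 \pmod{30}$ and $\operatorname{ord}_p(-2) \equiv 0 \pmod 4$ for each prime divisor $p$ of $v-2$. Then $\mathcal{V}$ is infinite, and for each $v \in \mathcal{V}$ there exists a Steiner triple system of order $v$ having no parallel class.
   Context: A Steiner triple system of order $v$ is a pair $(V,\mathcal{B})$ where $V$ is a set of $v$ points and $\mathcal{B}$ is a collection of $3$-element subsets of $V$ (triples) such that each unordered pair of distinct points lies in exactly one triple of $\mathcal{B}$. A parallel class in a Steiner triple system $(V,\mathcal{B})$ is a subset of $\mathcal{B}$ that partitions $V$. For a prime $p$, $\operatorname{ord}_p(x)$ denotes the multiplicative order of $x$ in $\mathbb{Z}_p$. *)

(* Defs.v *)
From mathcomp Require Import all_boot all_order all_algebra.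
Set Implicit Arguments. Unset Strict Implicit. Unset Printing Implicit Defensive.
Import GRing.Theory Num.Theory.

Definition is_mult_order (p : nat) (x : int) (k : nat) : Prop :=
  [/\ 0 < k,
      (p%:Z %| (x ^+ k - 1)%R)%Z
    & forall j : nat, 0 < j < k -> ~~ (p%:Z %| (x ^+ j - 1)%R)%Z]%N.

Definition ord_divisible (p : nat) (x : int) (d : nat) : Prop :=
  exists k, is_mult_order p x k /\ (d %| k)%N.

Definition inV (v : nat) : Prop :=
  [/\ 0 < v, v = 27 %[mod 30]
    & forall p, prime p -> (p %| v - 2) -> ord_divisible p (-2)%R 4]%N.

Definition is_STS (T : finType) (B : {set {set T}}) : Prop :=
  (forall b, b \in B -> #|b| = 3) /\
  (forall x y : T, x != y -> exists! b, b \in B /\ x \in b /\ y \in b).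

Definition parallel_class (T : finType) (B P : {set {set T}}) : Prop :=
  P \subset B /\ partition P [set: T].

(* Main.v *)
Require Import Defs.
From mathcomp Require Import all_boot all_order all_algebra all_fingroup all_solvable.
From mathcomp Require Import zify ring.
Set Implicit Arguments. Unset Strict Implicit. Unset Printing Implicit Defensive.
Import GRing.Theory Num.Theory.
Open Scope ring_scope.

Lemma dvdzD' (d x y : int) : (d %| x)%Z -> (d %| y)%Z -> (d %| x + y)%Z.
Proof. by move=> /dvdzP[a ->] /dvdzP[b ->]; apply/dvdzP; exists (a + b); ring. Qed.
Lemma dvdzN' (d x : int) : (d %| x)%Z -> (d %| - x)%Z.
Proof. by move=> /dvdzP[a ->]; apply/dvdzP; exists (- a); ring. Qed.
Lemma dvdzB' (d x y : int) : (d %| x)%Z -> (d %| y)%Z -> (d %| x - y)%Z.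
Proof. by move=> hx hy; apply: dvdzD' hx (dvdzN' hy). Qed.

Lemma ord_dvd p (x : int) k j : is_mult_order p x k ->
  (p%:Z %| x ^+ j - 1)%Z -> (k %| j)%N.
Proof.
move=> [k0 hk hmin] hj.
have hq : forall q, (p%:Z %| x ^+ (q * k) - 1)%Z.
  elim=> [|q IH]; first by rewrite mul0n expr0 subrr dvdz0.
  have -> : x ^+ (q.+1 * k) - 1 = x ^+ k * (x ^+ (q * k) - 1) + (x ^+ k - 1).
    by rewrite mulSn exprD; ring.
  by apply: dvdzD' => //; apply: dvdz_mull.
have hr : (p%:Z %| x ^+ (j %% k)%N - 1)%Z.
  have e : x ^+ j - 1 = x ^+ (j %% k)%N * (x ^+ (j %/ k * k)%N - 1) + (x ^+ (j %% k)%N - 1).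
    by rewrite {1}(divn_eq j k) exprD; ring.
  have := dvdzB' hj (dvdz_mull (x ^+ (j %% k)%N) (hq (j %/ k)%N)).
  by rewrite e addrC addKr.
case: (posnP (j %% k)%N) => [r0|rpos]; first by apply/eqP.
by have := hmin (j %% k)%N; rewrite rpos ltn_pmod // hr => /(_ isT).
Qed.

Lemma ord_even p (s : bool) d : ord_divisible p (-2) 4 ->
  (p%:Z %| (-2) ^+ d - (-1) ^+ s)%Z -> ~~ odd d.
Proof.
move=> [k [hk h4]] hd.
have h2k : (2 %| k)%N by apply: dvdn_trans h4; [].
case: s hd => /= hd.
  have : (p%:Z %| (-2 : int) ^+ (d * 2) - 1)%Z.
    have -> : (-2 : int) ^+ (d * 2) - 1 = ((-2) ^+ d - 1) * ((-2) ^+ d - (-1) ^+ 1).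
      by rewrite exprM; ring.
    exact: dvdz_mull.
  move=> /(ord_dvd hk) hk2.
  have : (4 %| d * 2)%N by apply: dvdn_trans h4 hk2.
  by rewrite (_ : 4 = 2 * 2)%N // dvdn_pmul2r // -dvdn2 => ->.
rewrite expr0 in hd.
have := ord_dvd hk hd => hkd.
have : (2 %| d)%N := dvdn_trans (dvdn_trans (isT : (2 %| 4)%N) h4) hkd.
by rewrite dvdn2.
Qed.

Lemma intr_natE (R : pzRingType) (k : nat) : ((Posz k)%:~R : R) = k%:R.
Proof. by []. Qed.

Section FanoS.
Local Open Scope nat_scope.
Definition ftab : seq (seq nat) :=
 [:: [:: 0;4;6;5;1;3;2]; [:: 4;1;3;2;0;6;5]; [:: 6;3;2;1;5;4;0]; [:: 5;2;1;3;6;0;4];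
     [:: 1;0;5;6;4;2;3]; [:: 3;6;4;0;2;5;1]; [:: 2;5;0;4;3;1;6]].
Definition fn (i j : nat) : nat := nth 0 (nth [::] ftab i) j.
Definition all7 (P : nat -> bool) := all P (iota 0 7).
Lemma all7P P i : all7 P -> (i < 7)%N -> P i.
Proof. by move=> /allP h hi; apply: h; rewrite mem_iota. Qed.
Lemma fano_b : all7 (fun i => all7 (fun j => [&& fn i j < 7, fn i j == fn j i &
   (i != j) ==> [&& fn i j != i & fn i (fn i j) == j]])).
Proof. by []. Qed.
Lemma fano_c : all7 (fun i => all7 (fun j => [&& (i < 5)%N, (j < 5)%N, i != j & (fn i j < 5)%N] ==> [|| (i == 1), (j == 1) | (fn i j == 1)])).
Proof. by []. Qed.
Lemma fano_d : all7 (fun i => all7 (fun j => [&& (i < 5)%N, (j < 5)%N, (fn 5 i < 5)%N & (fn 6 j < 5)%N] ==> [|| i == j, i == fn 6 j, fn 5 i == j | fn 5 i == fn 6 j])).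
Proof. by []. Qed.
Lemma fano_e : fn 5 6 = 1. Proof. by []. Qed.
End FanoS.

Section Con.
Variables (n' m : nat).
Local Notation n := n'.+2.
Hypothesis Hnm : (n = 5 * m)%N.
Hypothesis Hmodd : odd m.
Hypothesis Hm1 : (1 < m)%N.
Hypothesis H3 : coprime n 3.
Hypothesis Hpr : forall p, prime p -> (p %| m)%N -> ord_divisible p (-2) 4.
Local Notation Z := 'Z_n.

Lemma natr0E (k : nat) : ((k%:R : Z) == 0) = (n %| k)%N.
Proof. by rewrite Zp_nat -val_eqE. Qed.

Lemma intr0E (z : int) : (z%:~R : Z) = 0 -> (n%:Z %| z)%Z.
Proof.
case: z => k /=.
  by move=> /eqP; rewrite -pmulrn natr0E dvdzE.
rewrite NegzE mulrNz -pmulrn => /eqP; rewrite oppr_eq0 natr0E.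
by rewrite dvdzE.
Qed.

Definition M : Z := m%:R.
Definition inH (x : Z) := [exists k : Z, x == M * k].

Lemma inH_nat (Y : nat) : inH (Y%:R) = (m %| Y)%N.
Proof.
apply/existsP/idP.
  move=> [k /eqP hk].
  have : (((Y%:Z - (m * k)%:Z))%:~R : Z) = 0.
    by rewrite rmorphB /= !intr_natE hk /M natrM natr_Zp subrr.
  move=> /intr0E hn.
  have hm : (m%:Z %| Y%:Z - (m * k)%:Z)%Z.
    by apply: dvdz_trans hn; rewrite dvdzE /= Hnm dvdn_mull.
  have := dvdzD' hm (dvdz_mulr k (dvdzz m%:Z)).
  by rewrite PoszM subrK dvdzE.
move=> /dvdnP[q ->]; exists (q%:R); by rewrite /M natrM mulrC.
Qed.

Lemma inH0 : inH 0. Proof. by apply/existsP; exists 0; rewrite mulr0. Qed.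
Lemma inHD x y : inH x -> inH y -> inH (x + y).
Proof. by move=> /existsP[a /eqP->] /existsP[b /eqP->]; apply/existsP; exists (a+b); rewrite mulrDr. Qed.
Lemma inHMl x y : inH x -> inH (y * x).
Proof. by move=> /existsP[a /eqP->]; apply/existsP; exists (y*a); rewrite mulrCA. Qed.
Lemma inHN x : inH x -> inH (- x).
Proof. by move=> h; rewrite -mulN1r; apply: inHMl. Qed.
Lemma inHB x y : inH x -> inH y -> inH (x - y).
Proof. by move=> hx hy; apply: inHD => //; apply: inHN. Qed.
Lemma inHNE x : inH (- x) = inH x.
Proof. by apply/idP/idP => /inHN //; rewrite opprK. Qed.

Definition a : Z := -2.
Lemma odd_n : odd n. Proof. by rewrite Hnm oddM. Qed.
Lemma a_unit : a \is a GRing.unit.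
Proof. by rewrite /a unitrN unitZpE // coprimen2 odd_n. Qed.
Lemma three_unit : (3%:R : Z) \is a GRing.unit.
Proof. by rewrite unitZpE. Qed.

Lemma aaI x : x = a * (a * x) -> x = 0.
Proof.
move=> h; have e : 3%:R * x = a * (a * x) - x by rewrite /a; ring.
rewrite -h subrr -(mulr0 3%:R) in e.
exact: (mulrI three_unit e).
Qed.

Lemma inH_a x : inH (a * x) = inH x.
Proof.
apply/idP/idP; last exact: inHMl.
by move=> /(inHMl (a^-1)); rewrite mulrA mulVr ?a_unit // mul1r.
Qed.

Lemma inH_aX i x : inH (a ^+ i * x) = inH x.
Proof. by elim: i => [|i IH]; rewrite ?expr0 ?mul1r // exprS -mulrA inH_a. Qed.


Lemma KL d (s : bool) y : ~~ inH y -> inH ((a ^+ d - (-1) ^+ s) * y) -> ~~ odd d.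
Proof.
move=> hy /existsP[k /eqP hk].
pose ez : int := (-2) ^+ d - (-1) ^+ s.
have eez : (ez%:~R : Z) = a ^+ d - (-1) ^+ s.
  by rewrite /ez rmorphB !rmorphXn !rmorphN rmorph1 /= /a intr_natE.
have h0 : (((ez * (val y)%:Z) - (m * val k)%:Z)%:~R : Z) = 0.
  have -> : (((ez * (val y)%:Z) - (m * val k)%:Z)%:~R : Z) = ez%:~R * (val y)%:R - (m * val k)%:R.
    by rewrite rmorphB rmorphM.
  by rewrite eez natr_Zp natrM natr_Zp -/M -hk subrr.
move/intr0E: h0 => hn.
have hm : (m%:Z %| ez * (val y)%:Z)%Z.
  have hm' : (m%:Z %| ez * (val y)%:Z - (m * val k)%:Z)%Z.
    by apply: dvdz_trans hn; rewrite dvdzE /= Hnm dvdn_mull.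
  have := dvdzD' hm' (dvdz_mulr (val k) (dvdzz m%:Z)).
  by rewrite PoszM subrK.
case cop: (coprimez m ez).
  rewrite Gauss_dvdzr // dvdzE /= in hm.
  by move: hy; rewrite -(natr_Zp y) inH_nat hm.
have g1 : (1 < gcdn m `|ez|)%N.
  have : (0 < gcdn m `|ez|)%N by rewrite gcdn_gt0; apply/orP; left; lia.
  move: cop; rewrite coprimezE /coprime /=. lia.
have pp := pdiv_prime g1.
have pm : (pdiv (gcdn m `|ez|) %| m)%N := dvdn_trans (pdiv_dvd _) (dvdn_gcdl _ _).
apply: (ord_even (s:=s) (Hpr pp pm)).
by rewrite dvdzE /=; apply: dvdn_trans (pdiv_dvd _) (dvdn_gcdr _ _).
Qed.

Definition N := totient n.
Lemma N_gt0 : (0 < N)%N. Proof. by rewrite totient_gt0. Qed.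

Lemma aN : a ^+ N = 1.
Proof.
have an : a = n'%:R.
  have h : (n'%:R : Z) + 2%:R = 0 by rewrite -natrD; apply/eqP; rewrite natr0E addn2.
  by apply/eqP; rewrite eq_sym -addr_eq0 h.
have cop : coprime n' n.
  by rewrite -addn2 /coprime gcdnDl -/(coprime n' 2) coprimen2; have := odd_n; rewrite /= negbK.
rewrite an -natrX -Zp_nat_mod // (Euler_exp_totient cop) modn_small //.
Qed.

Lemma not_inH1 : ~~ inH 1.
Proof. by rewrite -(natr_Zp 1) (_ : val (1 : Z) = 1%N) // inH_nat dvdn1; lia. Qed.

Lemma N_even : ~~ odd N.
Proof.
apply: (KL (s := false) not_inH1).
by rewrite aN expr0 subrr mul0r inH0.
Qed.

Lemma sgn_sq (s : bool) : (-1) ^+ s * (-1) ^+ s = 1 :> Z.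
Proof. by case: s; rewrite ?expr0 ?expr1 ?mulr1 ?mulrNN ?mulr1. Qed.

Definition rel (u w : Z) := [exists s : bool, exists i : 'I_N, inH (w - (-1) ^+ s * a ^+ i * u)].

Lemma relP u w : reflect (exists (s : bool) (i : nat), inH (w - (-1) ^+ s * a ^+ i * u)) (rel u w).
Proof.
apply: (iffP idP).
  by move=> /existsP[s /existsP[i h]]; exists s, i.
move=> [s [i h]]; apply/existsP; exists s; apply/existsP; exists (Ordinal (ltn_pmod i N_gt0)).
by rewrite /= expr_mod // aN.
Qed.

Lemma rel_refl u : rel u u.
Proof. by apply/relP; exists false, 0%N; rewrite expr0 !mul1r subrr inH0. Qed.

Lemma rel_sym u w : rel u w -> rel w u.
Proof.
move=> /relP[s [i h]]; apply/relP; exists s, (N.-1 * i)%N.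
set A := a ^+ (N.-1 * i)%N; set B := a ^+ i.
have ha : A * B = 1.
  by rewrite /A /B -exprD -{2}(mul1n i) -mulnDl addn1 prednK ?N_gt0 // exprM aN expr1n.
have -> : u - (-1) ^+ s * A * w = - ((-1) ^+ s * A * (w - (-1) ^+ s * B * u))
     + ((-1) ^+ s * (-1) ^+ s * (A * B) - 1) * (- u) by ring.
by rewrite ha sgn_sq mulr1 subrr mul0r addr0; apply/inHN/inHMl.
Qed.

Lemma rel_trans u w z : rel u w -> rel w z -> rel u z.
Proof.
move=> /relP[s [i h]] /relP[t [j h2]]; apply/relP; exists (t (+) s), (j + i)%N.
have -> : z - (-1) ^+ (t (+) s) * a ^+ (j + i) * u =
   (z - (-1) ^+ t * a ^+ j * w) + (-1) ^+ t * a ^+ j * (w - (-1) ^+ s * a ^+ i * u).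
  by rewrite signr_addb exprD; ring.
by apply: inHD => //; apply: inHMl.
Qed.

Definition cls u := [set w | rel u w].
Definition rep u := odflt u [pick w in cls u].
Definition lab u := [exists s : bool, exists i : 'I_N, odd i && inH (rep u - (-1) ^+ s * a ^+ i * u)].

Lemma rel_rep u w : rel u w -> rep u = rep w.
Proof.
move=> h; have e : cls u = cls w.
  apply/setP => z; rewrite !inE.
  by apply/idP/idP => hz; [apply: rel_trans (rel_sym h) hz | apply: rel_trans h hz].
by rewrite /rep e; case: pickP => // /(_ w); rewrite inE rel_refl.
Qed.

Lemma rep_rel u : rel u (rep u).
Proof.
rewrite /rep; case: pickP => [w|]; first by rewrite inE.
by move/(_ u); rewrite inE rel_refl.
Qed.

Lemma KL2 u (s1 s2 : bool) i1 i2 : ~~ inH u ->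
  inH ((-1) ^+ s1 * a ^+ i1 * u - (-1) ^+ s2 * a ^+ i2 * u) -> odd i1 = odd i2.
Proof.
move=> hu.
wlog le : s1 s2 i1 i2 / (i2 <= i1)%N => [W h|].
  case: (leqP i2 i1) => hle; first exact: W hle h.
  symmetry; apply: (W s2 s1) (ltnW hle) _.
  by rewrite -inHNE opprB.
move=> h.
have hy : ~~ inH (a ^+ i2 * u) by rewrite inH_aX.
rewrite -(subnK le) oddD.
have := KL (d := (i1 - i2)%N) (s := s1 (+) s2) hy.
have -> : (a ^+ (i1 - i2) - (-1) ^+ (s1 (+) s2)) * (a ^+ i2 * u)
   = (-1) ^+ s1 * ((-1) ^+ s1 * a ^+ (i1 - i2 + i2) * u - (-1) ^+ s2 * a ^+ i2 * u)
     + (1 - (-1) ^+ s1 * (-1) ^+ s1) * (a ^+ (i1 - i2 + i2) * u).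
  by rewrite signr_addb exprD; ring.
rewrite sgn_sq subrr mul0r addr0 subnK // inHMl // => /(_ isT) /negbTE ->.
by rewrite addFb.
Qed.

Lemma labE u (s : bool) i : ~~ inH u -> inH (rep u - (-1) ^+ s * a ^+ i * u) -> lab u = odd i.
Proof.
move=> hu h; apply/idP/idP.
  move=> /existsP[t /existsP[j /andP[oj hj]]].
  rewrite (KL2 (s1 := s) (s2 := t) (i2 := j) hu) //.
  have -> : (-1) ^+ s * a ^+ i * u - (-1) ^+ t * a ^+ j * u =
       (rep u - (-1) ^+ t * a ^+ j * u) - (rep u - (-1) ^+ s * a ^+ i * u) by ring.
  exact: inHB.
move=> oi; apply/existsP; exists s; apply/existsP; exists (Ordinal (ltn_pmod i N_gt0)).
by rewrite /= odd_mod ?(negbTE N_even) // oi expr_mod ?aN.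
Qed.

Lemma lab_a u : ~~ inH u -> lab (a * u) = ~~ lab u.
Proof.
move=> hu.
have hau : ~~ inH (a * u) by rewrite inH_a.
have e : rep (a * u) = rep u.
  by symmetry; apply: rel_rep; apply/relP; exists false, 1%N; rewrite expr0 expr1 mul1r subrr inH0.
have /relP[s [i h]] := rep_rel u.
rewrite (labE hu h) (@labE _ s (i + N.-1)%N hau).
  by rewrite oddD -subn1 oddB ?N_gt0 // (negbTE N_even) /= addbT.
have ha : a ^+ (i + N.-1) * a = a ^+ i.
  by rewrite -exprSr -addnS prednK ?N_gt0 // exprD aN mulr1.
have -> : (-1) ^+ s * a ^+ (i + N.-1) * (a * u) = (-1) ^+ s * (a ^+ (i + N.-1) * a) * u by ring.
by rewrite e ha.
Qed.

Lemma lab_opp u w : ~~ inH u -> inH (u + w) -> lab w = lab u.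
Proof.
move=> hu huw.
have hw : ~~ inH w.
  apply: contra hu => hw; rewrite (_ : u = (u + w) - w); [exact: inHB | ring].
have e : rep w = rep u.
  by symmetry; apply: rel_rep; apply/relP; exists true, 0%N; rewrite /= expr0 mulr1 expr1 mulN1r opprK addrC.
have /relP[s [i h]] := rep_rel u.
rewrite (labE hu h) (@labE _ (~~ s) i hw) // e.
have -> : rep u - (-1) ^+ (~~ s) * a ^+ i * w =
   (rep u - (-1) ^+ s * a ^+ i * u) + (-1) ^+ s * a ^+ i * (u + w).
  by case: (s) h => _; rewrite /= ?expr0 ?expr1; ring.
by apply: inHD => //; apply: inHMl.
Qed.

Lemma lab_ainv u : ~~ inH u -> lab (a^-1 * u) = ~~ lab u.
Proof.
move=> hu; have hu' : ~~ inH (a^-1 * u).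
  by apply: contra hu => h; have := inHMl a h; rewrite mulrA divrr ?a_unit // mul1r.
have := lab_a hu'; rewrite mulrA divrr ?a_unit // mul1r => ->.
by rewrite negbK.
Qed.

Lemma Minj i j : (i < 5)%N -> (j < 5)%N -> M * i%:R = M * j%:R -> i = j.
Proof.
move=> hi hj; rewrite /M -!natrM !Zp_nat => /(congr1 val) /=.
rewrite (_ : (Zp_trunc n).+2 = n) // !modn_small; try nia.
Qed.

Lemma inH_code x : inH x -> exists i, (i < 5)%N /\ x = M * i%:R.
Proof.
move=> /existsP[k /eqP ->].
have hmod : forall j, ((j %% n)%N%:R : Z) = j%:R by move=> j; apply: Zp_nat_mod.
rewrite -(natr_Zp k); move: (val k) => K.
exists (K %% 5)%N; split; first by rewrite ltn_pmod.
have hk : ((m * K) %% n = m * (K %% 5))%N.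
  by rewrite Hnm (mulnC 5 m) muln_modr.
by rewrite /M -!natrM -hmod hk.
Qed.

Definition T := (Z + bool)%type.
Definition inS (t : T) := match t with inl x => inH x | inr _ => true end.
Definition e (i : nat) : T := if (i < 5)%N then inl (M * i%:R) else inr (i == 5)%N.
Definition code (t : T) : nat :=
  match t with
  | inl x => odflt 0%N (omap val [pick i : 'I_5 | x == M * (i : nat)%:R])
  | inr b => if b then 5%N else 6%N
  end.

Lemma code_lt7 t : (code t < 7)%N.
Proof. case: t => [x|[]] //=; case: pickP => //= i _; exact: (ltn_trans (ltn_ord i)). Qed.

Lemma code_inl x : inH x -> (code (inl x) < 5)%N /\ e (code (inl x)) = inl x.
Proof.
move=> /inH_code [i [hi ->]] /=.
case: pickP => [j /eqP hj | /(_ (Ordinal hi)) /=]; last by rewrite eqxx.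
by rewrite /= /e ltn_ord -hj.
Qed.

Lemma ce i : (i < 7)%N -> code (e i) = i.
Proof.
move=> h7; rewrite /e; case: (ltnP i 5) => hi /=.
  case: pickP => [j /eqP hj | /(_ (Ordinal hi)) /=]; last by rewrite eqxx.
  by rewrite /= (Minj (ltn_ord j) hi (esym hj)).
by case: eqP => [->|h5] //; lia.
Qed.

Lemma eS i : inS (e i).
Proof. by rewrite /e; case: ltnP => //= _; apply/existsP; exists i%:R. Qed.

Lemma ec t : inS t -> e (code t) = t.
Proof. by case: t => [x /code_inl []|[]]. Qed.

Lemma code_inj s t : inS s -> inS t -> code s = code t -> s = t.
Proof. by move=> hs ht hc; rewrite -(ec hs) -(ec ht) hc. Qed.

Lemma fnF i j : (i < 7)%N -> (j < 7)%N ->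
  [&& fn i j < 7, fn i j == fn j i & (i != j) ==> [&& fn i j != i & fn i (fn i j) == j]]%N.
Proof. by move=> hi hj; have := all7P fano_b hi => /= h; have := all7P h hj. Qed.

Definition th (s t : T) : T :=
  if inS s && inS t then e (fn (code s) (code t)) else
  match s, t with
  | inl x, inl y => if y == a * x then inr (lab x) else if x == a * y then inr (lab y) else inl (- x - y)
  | inl x, inr b => inl (if lab x == b then a * x else a^-1 * x)
  | inr b, inl y => inl (if lab y == b then a * y else a^-1 * y)
  | inr _, inr _ => s
  end.

Lemma thS s t : inS s -> inS t -> th s t = e (fn (code s) (code t)).
Proof. by rewrite /th => -> ->. Qed.

Lemma notH0 x : ~~ inH x -> x != 0.
Proof. by apply: contra => /eqP ->; exact: inH0. Qed.

Lemma ax_neq x : ~~ inH x -> a * x != x.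
Proof. move=> hx; apply/eqP => h; have := aaI (esym (etrans (congr1 (GRing.mul a) h) h)).
by move/eqP; rewrite (negbTE (notH0 hx)). Qed.

Lemma aix_neq x : ~~ inH x -> a^-1 * x != a * x.
Proof.
move=> hx; apply/eqP => h.
have h2 : x = a * (a * x) by rewrite -h mulrA divrr ?a_unit // mul1r.
by move: (notH0 hx); rewrite (aaI h2) eqxx.
Qed.

Lemma inH_ai x : inH (a^-1 * x) = inH x.
Proof.
apply/idP/idP => h; last exact: inHMl.
by have := inHMl a h; rewrite mulrA divrr ?a_unit // mul1r.
Qed.

Lemma aaiE x : a * (a^-1 * x) = x. Proof. by rewrite mulrA divrr ?a_unit // mul1r. Qed.
Lemma aiaE x : a^-1 * (a * x) = x. Proof. by rewrite mulrA mulVr ?a_unit // mul1r. Qed.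

Lemma th_sym s t : s != t -> th s t = th t s.
Proof.
move=> hst; rewrite /th andbC.
case hS: (inS t && inS s).
  by have /and3P[_ /eqP -> _] := fnF (code_lt7 s) (code_lt7 t).
case: s t hst hS => [x|b] [y|c] //= hst hS.
have [h1|h1] := eqVneq y (a*x); have [h2|h2] := eqVneq x (a*y) => //.
  rewrite h1 in h2; have x0 := aaI h2.
  by move: hst; rewrite h1 x0 mulr0 eqxx.
by rewrite addrC.
Qed.

Lemma th_neq s t : s != t -> th s t != s.
Proof.
move=> hst; rewrite /th; case hS: (inS s && inS t).
  move: hS => /andP[hs ht]; apply/eqP => h.
  have : code (e (fn (code s) (code t))) = code s by rewrite h.
  have /and3P[h7 _ /implyP hi] := fnF (code_lt7 s) (code_lt7 t).
  rewrite ce // => hc.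
  have hne : code s != code t by apply: contra hst => /eqP /(code_inj hs ht) ->.
  by move: (hi hne); rewrite hc eqxx.
case: s t hst hS => [x|b] [y|c] //= hst hS.
- have [h1|h1] := eqVneq y (a*x) => //; have [h2|h2] := eqVneq x (a*y) => //.
  apply/eqP => [[h]].
  have e1 : y = a * x + (x - (- x - y)) by rewrite /a; ring.
  by rewrite h subrr addr0 in e1; rewrite e1 eqxx in h1.
- have hx : ~~ inH x by rewrite andbT in hS; rewrite hS.
  apply/eqP => [[]]; case: ifP => _ h.
    by move: (ax_neq hx); rewrite h eqxx.
  by move: (ax_neq hx); rewrite -{1}h aaiE eqxx.
Qed.

Lemma th_inv s t : s != t -> th s (th s t) = t.
Proof.
move=> hst; case hS: (inS s && inS t).
  move/andP: hS => [hs ht].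
  have /and3P[h7 _ /implyP hi] := fnF (code_lt7 s) (code_lt7 t).
  have hne : code s != code t by apply: contra hst => /eqP /(code_inj hs ht) ->.
  rewrite (thS hs ht) thS ?eS // ce //.
  by have /andP[_ /eqP ->] := hi hne; rewrite ec.
case: s t hst hS => [x|b] [y|c] hst hS.
- have [h1|h1] := eqVneq y (a*x).
    have hx : ~~ inH x.
      by apply: contra (negbT hS) => hx; rewrite /= hx h1 inH_a hx.
    by rewrite {2}/th hS /= h1 eqxx /th /= (negbTE hx) /= eqxx.
  have [h2|h2] := eqVneq x (a*y).
    have hy : ~~ inH y.
      by apply: contra (negbT hS) => hy; rewrite /= hy h2 inH_a hy.
    rewrite {2}/th hS /= (negbTE h1) h2 eqxx /th /= inH_a (negbTE hy) /= lab_a //.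
    by case: (lab y) => /=; rewrite aiaE.
  rewrite {2}/th hS /= (negbTE h1) (negbTE h2).
  have hS2 : inH x && inH (- x - y) = false.
    apply/negbTE; apply: contra (negbT hS) => /andP[hx hz]; rewrite /= hx /=.
    by rewrite (_ : y = - x - (- x - y)); [apply: inHB (inHN hx) hz | ring].
  have h3 : (- x - y == a * x) = false.
    apply/negbTE/eqP => h; have e1 : y = x + (a * x - (- x - y)) by rewrite /a; ring.
    by rewrite h subrr addr0 in e1; rewrite e1 eqxx in hst.
  have h4 : (x == a * (- x - y)) = false.
    apply/negbTE/eqP => h; have e2 : x = a * y - (x - a * (- x - y)) by rewrite /a; ring.
    by rewrite -h subrr subr0 in e2; rewrite e2 eqxx in h2.
  by rewrite /th /= hS2 h3 h4; congr inl; ring.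
- move: hS; rewrite /= andbT => /negbT hx.
  rewrite {2}/th /= (negbTE hx) /=.
  case: eqP => hc.
    by rewrite /th /= (negbTE hx) /= eqxx hc.
  rewrite /th /= (negbTE hx) /= (negbTE (aix_neq hx)) aaiE eqxx lab_ainv //.
  by move: hc; case: (lab x); case: (c).
- move: hS => /= /negbT hy.
  rewrite {2}/th /= (negbTE hy) /=.
  case: eqP => hb.
    rewrite /th /= inH_a (negbTE hy) /= lab_a // -hb.
    by case: (lab y) => /=; rewrite aiaE.
  rewrite /th /= inH_ai (negbTE hy) /= lab_ainv //.
  by move: hb; case: (lab y); case: (b) => //= _; rewrite aaiE.
- by [].
Qed.

Lemma tri s t : s != t ->
  let u := th s t in
  [/\ u != s, u != t, th s u = t, th t u = s & [/\ th u s = t, th u t = s & th t s = u]].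
Proof.
move=> hst u.
have hus : u != s by apply: th_neq.
have hut : u != t by rewrite /u th_sym //; apply: th_neq; rewrite eq_sym.
have h1 : th s u = t by apply: th_inv.
have h2 : th t u = s by rewrite /u (th_sym hst) th_inv // eq_sym.
split => //; split.
- by rewrite (th_sym hus).
- by rewrite (th_sym hut).
- by rewrite th_sym // eq_sym.
Qed.

Lemma set3C12 (x y z : T) : [set x; y; z] = [set y; x; z].
Proof. by apply/setP => w; rewrite !inE; case: (w == x); case: (w == y). Qed.
Lemma set3C23 (x y z : T) : [set x; y; z] = [set x; z; y].
Proof. by apply/setP => w; rewrite !inE; case: (w == z); case: (w == y); rewrite ?orbT. Qed.

Lemma blockE s t x y : s != t -> x != y -> x \in [set s; t; th s t] -> y \in [set s; t; th s t] ->
  [set s; t; th s t] = [set x; y; th x y].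
Proof.
move=> hst hxy hx hy; have [h1 h2 h3 h4 [h5 h6 h7]] := tri hst.
move: hx hy hxy.
rewrite !inE => /orP[/orP[]|] /eqP -> /orP[/orP[]|] /eqP -> //; rewrite ?eqxx // => _;
  rewrite ?h3 ?h4 ?h5 ?h6 ?h7;
  by apply/setP => w; rewrite !inE; case: (w == s); case: (w == t); case: (w == th s t); rewrite ?orbT.
Qed.

Lemma card3 s t : s != t -> #|[set s; t; th s t]| = 3%N.
Proof.
move=> hst; have [h1 h2 _ _ _] := tri hst.
have -> : [set s; t; th s t] = s |: [set t; th s t].
  by apply/setP => w; rewrite !inE orbA.
by rewrite cardsU1 cards2 !inE (negbTE hst) /= (eq_sym s) (eq_sym t) h1 h2.
Qed.

Definition Bl : {set {set T}} := [set [set p.1; p.2; th p.1 p.2] | p : T * T & p.1 != p.2].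

Lemma BlP b : reflect (exists s t, s != t /\ b = [set s; t; th s t]) (b \in Bl).
Proof.
apply: (iffP imsetP) => [[[s t] /= hst ->]|[s [t [hst ->]]]].
  by exists s, t; rewrite inE in hst.
by exists (s, t); rewrite ?inE.
Qed.

Lemma Bl_STS : is_STS Bl.
Proof.
split; first by move=> b /BlP[s [t [hst ->]]]; apply: card3.
move=> x y hxy; exists [set x; y; th x y]; split.
  split; first by apply/BlP; exists x, y.
  by split; rewrite !inE eqxx ?orbT.
move=> b [/BlP[s [t [hst ->]]] [hx hy]].
by rewrite (blockE hst hxy hx hy).
Qed.

Definition F (t : T) : Z := match t with inl x => x | inr _ => 0 end.

Lemma two_unit : (2%:R : Z) \is a GRing.unit.
Proof. by rewrite unitZpE // coprimen2 odd_n. Qed.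

Lemma sumZ : \sum_(x : Z) x = 0.
Proof.
set S := \sum_(x : Z) x.
have h : S = - S by rewrite /S -sumrN (reindex_inj oppr_inj).
have h2 : 2%:R * S = 2%:R * 0 by rewrite mulr0 mulr_natl mulr2n {1}h addNr.
exact: (mulrI two_unit h2).
Qed.

Lemma sumT : \sum_(t in [set: T]) F t = 0.
Proof.
rewrite (eq_bigl predT) ?big_sumType /=; last by move=> t; rewrite inE.
by rewrite sumZ big1 ?addr0.
Qed.

Lemma sumB s t : s != t -> \sum_(z in [set s; t; th s t]) F z = F s + F t + F (th s t).
Proof.
move=> hst; have [h1 h2 _ _ _] := tri hst.
have -> : [set s; t; th s t] = s |: (t |: [set th s t]).
  by apply/setP => w; rewrite !inE orbA.
rewrite big_setU1 /=; last by rewrite !inE negb_or hst eq_sym h1.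
rewrite big_setU1 /=; last by rewrite inE eq_sym.
by rewrite big_set1 addrA.
Qed.

Lemma inHM k : inH (M * k). Proof. by apply/existsP; exists k. Qed.

Lemma e1M : e 1 = inl M. Proof. by rewrite /e /= mulr1. Qed.

Lemma C0 b : b \in Bl -> inr true \notin b -> inr false \notin b ->
  inH (\sum_(z in b) F z) /\ (inl M \notin b -> \sum_(z in b) F z = 0).
Proof.
move=> /BlP[s [t [hst ->]]] h1 h2.
have noinr : forall c, inr c \notin [set s; t; th s t] by case.
have [hu1 hu2 _ _ _] := tri hst.
rewrite sumB //.
case: s t hst h1 h2 noinr hu1 hu2 => [x|c] [y|d] hst h1 h2 noinr hu1 hu2;
  try by move: (noinr c); rewrite !inE eqxx.
  2: by move: (noinr d); rewrite !inE eqxx ?orbT.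
set u := th (inl x) (inl y).
have uin : u \in [set inl x; inl y; u] by rewrite !inE eqxx ?orbT.
case hH: (inH x && inH y).
  move/andP: hH => [hx hy].
  have [cx5 ecx] := code_inl hx; have [cy5 ecy] := code_inl hy.
  have hne : code (inl x) != code (inl y).
    by apply: contra hst => /eqP /(code_inj (s:=inl x) (t:=inl y) hx hy) ->.
  have hu : u = e (fn (code (inl x)) (code (inl y))) by rewrite /u thS.
  set k := fn _ _ in hu.
  have k5 : (k < 5)%N.
    rewrite ltnNge; apply/negP => hk; move: hu; rewrite /e ltnNge hk /= => hu.
    by move: (noinr (k == 5)%N); rewrite -hu uin.
  move: hu; rewrite /e k5 => hu; rewrite hu /=.
  split; first by apply: inHD; [apply: inHD | apply: inHM].
  move=> hM; exfalso; move: hM; apply/negP/negPn.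
  have := all7P (all7P fano_c (code_lt7 (inl x))) (code_lt7 (inl y)).
  rewrite cx5 cy5 hne k5 /= => /or3P[] /eqP h.
  - by rewrite -e1M -h ecx !inE eqxx.
  - by rewrite -e1M -h ecy !inE eqxx ?orbT.
  - by rewrite -e1M -h /e k5 -hu !inE eqxx ?orbT.
have hu : u = if y == a * x then inr (lab x) else if x == a * y then inr (lab y) else inl (- x - y).
  by rewrite /u /th /= hH.
move: hu; case: ifP => _ hu.
  by move: (noinr (lab x)); rewrite -hu uin.
move: hu; case: ifP => _ hu.
  by move: (noinr (lab y)); rewrite -hu uin.
rewrite hu /= (_ : x + y + (- x - y) = 0); last by ring.
by split => //; apply: inH0.
Qed.

Definition cb (b : bool) : nat := if b then 5%N else 6%N.

Lemma C1 (bt : bool) b : b \in Bl -> inr bt \in b -> inr (~~ bt) \notin b ->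
  (inH (\sum_(z in b) F z) /\ exists i j, [/\ (i < 5)%N, (j < 5)%N, j = fn (cb bt) i & b = [set inr bt; e i; e j]])
  \/ (exists q, [/\ ~~ inH q, lab q = bt & \sum_(z in b) F z = - q]).
Proof.
move=> /BlP[s [t [hst hb]]] hin hnot.
have [y [yin yne]] : exists y, y \in b /\ y != inr bt.
  case: (eqVneq s (inr bt)) => hs.
    by exists t; rewrite hb !inE eqxx ?orbT; split => //; rewrite -hs eq_sym.
  by exists s; rewrite hb !inE eqxx.
have hb' : b = [set inr bt; y; th (inr bt) y].
  have e1 : inr bt != y by rewrite eq_sym.
  have hin' := hin; have yin' := yin; rewrite hb in hin' yin'.
  by rewrite hb (blockE hst e1 hin' yin').
case: y yin yne hb' => [z|c] yin yne hb'; last first.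
  by move: yin yne hnot; case: (c); case: (bt) => //= ->.
have hzb : inr bt != inl z by [].
case hz: (inH z).
  left; have [i5 ei] := code_inl hz.
  set i := code (inl z) in i5 ei.
  have hth : th (inr bt) (inl z) = e (fn (cb bt) i) by rewrite thS //; case: (bt).
  set j := fn _ i in hth.
  have hcb : (cb bt < 7)%N by case: (bt).
  have /and3P[j7 _ /implyP hji] := fnF hcb (code_lt7 (inl z)).
  have hcbi : cb bt != i by apply/negP => /eqP hc; move: i5; rewrite -hc; case: (bt).
  have /andP[hjn _] := hji hcbi.
  have j5 : (j < 5)%N.
    rewrite ltnNge; apply/negP => hj.
    have hej : e j = inr (~~ bt).
      rewrite /e ltnNge hj /=; congr inr.
      have hjn' : j != cb bt := hjn.
      have j7' : (j < 7)%N := j7.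
      move: hjn' j7' hj; clearbody j; rewrite /cb; case: (bt) => /= h1 h2 h3.
        exact/negbTE.
      by apply/eqP; lia.
    by move: hnot; rewrite -hej -hth hb' !inE eqxx ?orbT.
  split.
    rewrite hb'; apply: (big_ind inH inH0 inHD) => w; rewrite !inE => /orP[/orP[]|] /eqP ->.
    - exact: inH0.
    - by [].
    - by rewrite hth /e j5 /=; apply: inHM.
  by exists i, j; split => //; rewrite hb' hth ei.
right; exists (if lab z == bt then z else a^-1 * z).
have hth : th (inr bt) (inl z) = inl (if lab z == bt then a * z else a^-1 * z) by rewrite /th /= hz.
rewrite hb' sumB // hth /=.
case: eqP => hl; split => //.
- by rewrite hz.
- by rewrite /a; ring.
- by rewrite inH_ai hz.
- by rewrite lab_ainv ?hz //; move: hl; case: (lab z); case: (bt).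
- set w := a^-1 * z; rewrite -{1}(aaiE z) -/w /a; ring.
Qed.

Lemma C2 b : b \in Bl -> inr true \in b -> inr false \in b -> b = [set inr true; inr false; inl M].
Proof.
move=> /BlP[s [t [hst ->]]] h1 h2.
rewrite (blockE hst (isT : inr true != inr false) h1 h2) // thS //=.
by rewrite fano_e e1M.
Qed.

Lemma sum3 x y z : x != y -> x != z -> y != z ->
  \sum_(w in [set x; y; z]) F w = F x + F y + F z.
Proof.
move=> hxy hxz hyz.
have -> : [set x; y; z] = x |: (y |: [set z]).
  by apply/setP => w; rewrite !inE orbA.
rewrite big_setU1 /=; last by rewrite !inE negb_or hxy hxz.
rewrite big_setU1 /=; last by rewrite inE.
by rewrite big_set1 addrA.
Qed.

Lemma M_neq0 : M != 0.
Proof. rewrite /M natr0E; apply/negP => /dvdn_leq; lia. Qed.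

Lemma noPC : ~ (exists P, parallel_class Bl P).
Proof.
move=> [P [sPB hpart]].
have hcov := cover_partition hpart.
have htriv : trivIset P by case/and3P: hpart.
have hsum : \sum_(b in P) \sum_(z in b) F z = 0.
  by rewrite -(set_partition_big _ hpart) sumT.
have inP : forall t, exists2 b, b \in P & t \in b.
  move=> t; have : t \in cover P by rewrite hcov inE.
  by move/bigcupP => [b hb htb]; exists b.
have same : forall A B t, A \in P -> B \in P -> t \in A -> t \in B -> A = B.
  move=> A B t hA hB htA htB; case: (eqVneq A B) => // hne.
  by have := (trivIsetP htriv) A B hA hB hne => /disjointFr /(_ htA); rewrite htB.
have inB : forall b, b \in P -> b \in Bl := fun b hb => subsetP sPB b hb.
have [b1 hb1 i1] := inP (inr true).
have [b2 hb2 i2] := inP (inr false).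
case: (eqVneq b1 b2) => [e12|n12].
  rewrite -e12 in i2; have hb1E := C2 (inB _ hb1) i1 i2.
  rewrite (bigD1 b1) //= in hsum.
  have hrest : \sum_(b in P | b != b1) \sum_(z in b) F z = 0.
    apply: big1 => b /andP[hb hne].
    have nb : forall t, t \in b1 -> t \notin b.
      by move=> t ht; apply/negP => htb; move: hne; rewrite (same _ _ _ hb hb1 htb ht) eqxx.
    apply: (C0 (inB _ hb) (nb _ i1) (nb _ i2)).2; apply: nb; by rewrite hb1E !inE eqxx ?orbT.
  move: hsum; rewrite hrest addr0 hb1E sum3 //= !add0r => /eqP.
  by rewrite (negbTE M_neq0).
have ni2 : inr false \notin b1.
  by apply/negP => h; move: n12; rewrite (same _ _ _ hb1 hb2 h i2) eqxx.
have ni1 : inr true \notin b2.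
  by apply/negP => h; move: n12; rewrite (same _ _ _ hb1 hb2 i1 h) eqxx.
move: hsum; rewrite (bigD1 b1) //= (bigD1 b2) /=; last by rewrite hb2 eq_sym n12.
set R := \sum_(i | (i \in P) && (i != b1) && (i != b2)) \sum_(z in i) F z => hsum.
have hR : inH R.
  apply: (big_ind inH inH0 inHD) => b /andP[/andP[hb hn1] hn2].
  have nb : forall bb, bb \in P -> bb != b -> forall t, t \in bb -> t \notin b.
    by move=> bb hbb hne t ht; apply/negP => htb; move: hne; rewrite (same _ _ _ hb hbb htb ht) eqxx.
  apply: (C0 (inB _ hb) _ _).1.
    by apply: (nb b1) => //; rewrite eq_sym.
  by apply: (nb b2) => //; rewrite eq_sym.
set G1 := \sum_(z in b1) F z in hsum.
set G2 := \sum_(z in b2) F z in hsum.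
have hG : inH (G1 + G2).
  by rewrite (_ : G1 + G2 = - R); [apply: inHN | apply/eqP; rewrite -addr_eq0 -addrA hsum].
have [[hH1 [i [j [i5 j5 hj hb1E]]]]|[q1 [hq1 lq1 hs1]]] := C1 (inB _ hb1) i1 ni2;
have [[hH2 [i' [j' [i5' j5' hj' hb2E]]]]|[q2 [hq2 lq2 hs2]]] := C1 (inB _ hb2) i2 ni1.
- have := all7P (all7P fano_d (ltn_trans i5 (isT : 5 < 7)%N)) (ltn_trans i5' (isT : 5 < 7)%N).
  rewrite /= i5 i5' -hj -hj' j5 j5' /=.
  have hb12 : forall k, e k \in b1 -> e k \in b2 -> False.
    by move=> k h1 h2; move: n12; rewrite (same _ _ _ hb1 hb2 h1 h2) eqxx.
  case/or4P => /eqP h.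
  - by apply: (hb12 i); [rewrite hb1E | rewrite hb2E h]; rewrite !inE eqxx ?orbT.
  - by apply: (hb12 i); [rewrite hb1E | rewrite hb2E h]; rewrite !inE eqxx ?orbT.
  - by apply: (hb12 j); [rewrite hb1E | rewrite hb2E h]; rewrite !inE eqxx ?orbT.
  - by apply: (hb12 j); [rewrite hb1E | rewrite hb2E h]; rewrite !inE eqxx ?orbT.
- move: hG; rewrite /G1 /G2 hs2 => h; have := inHB h hH1.
  by rewrite addrAC subrr add0r inHNE (negbTE hq2).
- move: hG; rewrite /G1 /G2 hs1 => h; have := inHB h hH2.
  by rewrite addrK inHNE (negbTE hq1).
- move: hG; rewrite /G1 /G2 hs1 hs2 -opprD inHNE => hq.
  by move: (lab_opp hq1 hq); rewrite lq1 lq2.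
Qed.

End Con.

Lemma main2 n' m : (n'.+2 = 5 * m)%N -> odd m -> (1 < m)%N -> coprime n'.+2 3 ->
  (forall p, prime p -> (p %| m)%N -> ord_divisible p (-2) 4) ->
  exists B : {set {set T n'}}, is_STS B /\ ~ (exists P, parallel_class B P).
Proof.
move=> h1 h2 h3 h4 h5.
by exists (Bl n' m); split; [exact: Bl_STS h1 h2 h3 h4 h5 | exact: noPC h1 h2 h3 h4 h5].
Qed.

Lemma transport (U V : finType) (f : U -> V) (g : V -> U) : cancel f g -> cancel g f ->
  (exists B : {set {set V}}, is_STS B /\ ~ (exists P, parallel_class B P)) ->
  exists B : {set {set U}}, is_STS B /\ ~ (exists P, parallel_class B P).
Proof.
move=> fK gK [B [[h3 hu] hnp]].
have memg : forall (b : {set V}) x, (x \in g @: b) = (f x \in b).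
  move=> b x; apply/imsetP/idP => [[y hy ->]|h]; first by rewrite gK.
  by exists (f x); rewrite ?fK.
have memf : forall (c : {set U}) t, (t \in f @: c) = (g t \in c).
  move=> c t; apply/imsetP/idP => [[y hy ->]|h]; first by rewrite fK.
  by exists (g t); rewrite ?gK.
exists [set g @: b | b : {set V} in B]; split; first split.
- move=> b' /imsetP[b hb ->]; rewrite card_imset; [exact: h3 | exact: can_inj gK].
- move=> x y hxy.
  have hfxy : f x != f y by apply: contra hxy => /eqP /(can_inj fK) ->.
  have [b [[hb [hx hy]] huniq]] := hu _ _ hfxy.
  exists (g @: b); split; first by split; [apply: imset_f | rewrite !memg].
  move=> b' [/imsetP[c hc ->] [hx' hy']]; rewrite !memg in hx' hy'.
  by rewrite (huniq c (conj hc (conj hx' hy'))).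
- move=> [P [sPB hpart]]; apply: hnp.
  exists [set f @: c | c : {set U} in P]; split.
    apply/subsetP => a /imsetP[c hc ->].
    have /imsetP[b hb ->] := subsetP sPB c hc.
    rewrite (_ : f @: (g @: b) = b) //; apply/setP => t; by rewrite memf memg gK.
  have hcov := cover_partition hpart.
  case/and3P: hpart => _ htriv h0.
  apply/and3P; split.
  + apply/eqP/setP => t; rewrite inE; apply/bigcupP.
    have : g t \in cover P by rewrite hcov inE.
    move/bigcupP => [c hc hgt]; exists (f @: c); first exact: imset_f.
    by rewrite memf.
  + apply/trivIsetP => A A' /imsetP[c hc ->] /imsetP[c' hc' ->] hne.
    have hcc : c != c' by apply: contra hne => /eqP ->.
    have hd := (trivIsetP htriv) c c' hc hc' hcc.
    rewrite -setI_eq0; apply/eqP/setP => t; rewrite !inE !memf.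
    by apply/negP => /andP[h1 h2]; move: (disjointFr hd h1); rewrite h2.
  + apply/negP => /imsetP[c hc /esym /eqP]; rewrite imset_eq0 => /eqP hc0.
    by move: h0; rewrite -hc0 hc.
Qed.

Close Scope ring_scope.

Lemma p25 k : (25 ^ k.+1 %% 30 = 25)%N.
Proof. by elim: k => [|k IH] //; rewrite expnS -modnMmr IH. Qed.

Lemma ord5 : ord_divisible 5 (-2)%R 4.
Proof.
exists 4; split => //; split => //.
by move=> [|[|[|[|j]]]].
Qed.

Lemma part1 N : exists v, (N < v)%N /\ inV v.
Proof.
exists (25 ^ N.+1 + 2); split.
  have h := @ltn_expl 25 N.+1 isT; lia.
split => //.
  by rewrite addn2.
  by rewrite -modnDml p25.
move=> p pp; rewrite addnK (Euclid_dvdX _ _ pp) => /andP[h _].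
have : p = 5.
  by move: h; rewrite (_ : 25 = 5 * 5) // Euclid_dvdM // orbb (dvdn_prime2 pp) // => /eqP.
by move=> ->; exact: ord5.
Qed.

Theorem theorem1 :
  (forall N : nat, exists v : nat, (N < v)%N /\ inV v) /\
  (forall v : nat, inV v ->
     exists B : {set {set 'I_v}},
       is_STS B /\ ~ (exists P : {set {set 'I_v}}, parallel_class B P)).
Proof.
split; first exact: part1.
move=> v [v0 hv hpr].
pose n' := (v - 4)%N; pose m := ((v - 2) %/ 5)%N.
have hnm : (n'.+2 = 5 * m)%N by rewrite /n' /m; lia.
have hodd : odd m.
  have : (m %% 2 = 1)%N by rewrite /m; lia.
  by rewrite modn2; case: (odd m).
have hm1 : (1 < m)%N by rewrite /m; lia.
have h3 : coprime n'.+2 3.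
  by rewrite coprime_sym prime_coprime //; apply/negP; rewrite /n'; lia.
have h5 : forall p, prime p -> (p %| m)%N -> ord_divisible p (-2)%R 4.
  move=> p pp pm; have := hpr p pp; apply; apply: dvdn_trans pm _; apply/dvdnP; exists 5; rewrite /m; lia.
have hc : #|{: T n'}| = v by rewrite card_sum card_ord card_bool /n' /Zp_trunc /=; lia.
apply: (@transport _ _ (fun i : 'I_v => enum_val (cast_ord (esym hc) i)) (fun t => cast_ord hc (enum_rank t))).
- by move=> i /=; rewrite enum_valK cast_ordKV.
- by move=> t /=; rewrite cast_ordK enum_rankK.
- exact: main2 hnm hodd hm1 h3 h5.
Qed.
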